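(* Let $R$ be a commutative ring, $I$ an ideal of $R$ and $n\ge 3$. Let $\varepsilon=\varepsilon_1\cdots\varepsilon_r\in\mathrm{EO}^1_{2n}(R,I)$ where each $\varepsilon_k$ is one of the generators $oe_{1i}(a)$ ($a\in R$, $3\le i\le 2n$) or $oe_{j1}(x)$ ($x\in I$, $3\le j\le 2n$). Let $oe_{ij}(Xf(X))$ be a generator of $\mathrm{EO}^1_{2n}(R[X],I[X])$, i.e. either $i=1$, $3\le j\le 2n$ and $f(X)\in R[X]$, or $j=1$, $3\le i\le 2n$ and $f(X)\in I[X]$. Then in $\mathrm{EO}_{2n}(R[X,Y])$ $$\varepsilon\, oe_{ij}\big(Y^{4^r}Xf(Y^{4^r}X)\big)\,\varepsilon^{-1}=\prod_{t=1}^s oe_{i_tj_t}\big(Yh_t(X,Y)\big)$$ for some $s$, where for each $t$ either $i_t=1$ and $h_t(X,Y)\in R[X,Y]$, or $j_t=1$ and $h_t(X,Y)\in I[X,Y]$.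
   Context: Let $\sigma$ be the permutation of $\{1,\dots,2n\}$ with $\sigma(2i)=2i-1$, $\sigma(2i-1)=2i$. For a commutative ring $A$, $z\in A$ and $1\le i\ne j\le 2n$ with $i\ne\sigma(j)$, $oe_{ij}(z)=1_{2n}+z e_{ij}-z e_{\sigma(j)\sigma(i)}$ (these are orthogonal with respect to $\widetilde\psi_n=\sum_{i=1}^n(e_{2i-1,2i}+e_{2i,2i-1})$), and $\mathrm{EO}_{2n}(A)$ is the group they generate. For an ideal $J$ of $A$, $\mathrm{EO}^1_{2n}(A,J)$ is the subgroup of $\mathrm{EO}_{2n}(A)$ generated by $oe_{1i}(a)$, $oe_{j1}(x)$ with $a\in A$, $x\in J$, $3\le i,j\le 2n$. $I[X]=IR[X]$, $I[X,Y]=IR[X,Y]$. *)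

(* Defs.v *)
From HB Require Import structures.
From mathcomp Require Import all_boot all_order all_algebra.
Set Implicit Arguments. Unset Strict Implicit. Unset Printing Implicit Defensive.
Import GRing.Theory.
Local Open Scope ring_scope.

(* Indices are 0-based: paper index k (1 <= k <= 2n) is k-1 here.
   The paper's sigma (2i <-> 2i-1) becomes  k <-> k xor 1  on 0-based indices. *)
Definition sig (k : nat) : nat := if odd k then k.-1 else k.+1.

Definition oe (A : comNzRingType) (n i j : nat) (z : A) : 'M[A]_(n.*2) :=
  \matrix_(a, b) (((a == b :> nat)%:R : A)
                  + z * ((a == i :> nat) && (b == j :> nat))%:R
                  - z * ((a == sig j :> nat) && (b == sig i :> nat))%:R).

Definition oe_idx (n i j : nat) : bool :=
  [&& (i < n.*2)%N, (j < n.*2)%N, i != j & i != sig j].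

Definition oe_prod (A : comNzRingType) (n : nat) (s : seq (nat * nat * A))
  : 'M[A]_(n.*2) :=
  foldr (fun g M => oe n g.1.1 g.1.2 g.2 *m M) 1%:M s.

Definition is_ideal (R : comNzRingType) (I : {pred R}) : Prop :=
  [/\ 0 \in I,
      (forall x y, x \in I -> y \in I -> x + y \in I) &
      (forall a x, x \in I -> a * x \in I)].

(* Generators of EO^1_{2n}(R, I): oe_{1i}(a), a in R, 3 <= i <= 2n;
   oe_{j1}(x), x in I, 3 <= j <= 2n   (0-based: 1 -> 0, 3..2n -> 2..2n-1). *)
Definition EO1_gen (R : comNzRingType) (n : nat) (I : {pred R})
  (g : nat * nat * R) : bool :=
  ((g.1.1 == 0%N) && (2 <= g.1.2 < n.*2)%N)
  || [&& g.1.2 == 0%N, (2 <= g.1.1 < n.*2)%N & g.2 \in I].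

Definition polyI (R : comNzRingType) (I : {pred R}) (p : {poly R}) : Prop :=
  forall k, p`_k \in I.
Definition polyI2 (R : comNzRingType) (I : {pred R}) (h : {poly {poly R}}) : Prop :=
  forall k l, (h`_k)`_l \in I.

(* R[X,Y] is modelled as {poly {poly R}}: inner variable X, outer variable Y. *)
Definition varX (R : comNzRingType) : {poly {poly R}} := ('X)%:P.
Definition varY (R : comNzRingType) : {poly {poly R}} := 'X.
Definition cst2 (R : comNzRingType) (a : R) : {poly {poly R}} := (a%:P)%:P.
Definition eval2 (R : comNzRingType) (f : {poly R}) (u : {poly {poly R}}) :=
  (map_poly (@cst2 R) f).[u].

(* Main.v *)
Require Import Defs.
From HB Require Import structures.
From mathcomp Require Import all_boot all_order all_algebra.
From mathcomp Require Import ring lra zify.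
Import GRing.Theory.
Local Open Scope ring_scope.
Set Implicit Arguments. Unset Strict Implicit. Unset Printing Implicit Defensive.

Ltac genbig := repeat (match goal with |- context [bigop ?a ?b ?c] => let s := fresh "s" in move: (bigop a b c) => s end).
Ltac lin := apply/matrixP => ? ?; rewrite !mxE; genbig; ring.

Section Mx.
Variables (A : comNzRingType) (n : nat).
Local Notation N := n.*2.

Definition Em (i j : nat) : 'M[A]_N :=
  \matrix_(a, b) (((a == i :> nat) && (b == j :> nat))%:R).
Definition Dm i j := Em i j - Em (sig j) (sig i).

Lemma oeE i j z : oe n i j z = 1%:M + z *: Dm i j.
Proof. apply/matrixP => a b; rewrite !mxE; ring. Qed.

Lemma EmEm i j k l : (j < N)%N -> Em i j *m Em k l = (j == k)%:R *: Em i l.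
Proof.
move=> Hj; apply/matrixP => a b; rewrite !mxE.
rewrite (bigD1 (Ordinal Hj)) //= big1 ?addr0; last first.
  move=> c Hc; rewrite !mxE (_ : (c == j :> nat) = false) ?andbF ?mul0r //.
  by apply: contraNF Hc => /eqP H; apply/eqP/val_inj.
rewrite !mxE eqxx andbT.
by case: (a == i :> nat); case: (j == k); case: (b == l :> nat);
  rewrite ?mul1r ?mul0r ?mulr1 ?mulr0.
Qed.

Definition T (x : A) (M : 'M[A]_N) := 1%:M + x *: M.

Lemma mulTT x y (M1 M2 : 'M[A]_N) :
  T x M1 *m T y M2 = 1%:M + x *: M1 + y *: M2 + (x * y) *: (M1 *m M2).
Proof.
rewrite /T mulmxDl !mulmxDr !mul1mx !mulmx1 -scalemxAl -scalemxAr scalerA.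
by apply/matrixP => a b; rewrite !mxE; ring.
Qed.

Ltac expand := repeat progress (rewrite ?mulmxDl ?mulmxDr ?mul1mx ?mulmx1 ?mulmxBl ?mulmxBr
  ?mulNmx ?mulmxN ?mul0mx ?mulmx0 ?scaler0 ?scale0r -?scalemxAl -?scalemxAr ?mulmxA).


Lemma T_inv x M : M *m M = 0 -> T x M *m T (- x) M = 1%:M.
Proof. move=> H; rewrite /T; expand; rewrite H; lin. Qed.

Lemma T_comm x y M1 M2 : M1 *m M2 = M2 *m M1 -> T x M1 *m T y M2 = T y M2 *m T x M1.
Proof. move=> H; rewrite /T; expand; rewrite H; lin. Qed.

Lemma T_commutator x y M1 M2 :
  M1 *m M1 = 0 -> M2 *m M2 = 0 -> M1 *m M2 *m M1 = 0 -> M2 *m M1 *m M2 = 0 ->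
  T x M1 *m T y M2 *m T (- x) M1 *m T (- y) M2 = T (x * y) (M1 *m M2 - M2 *m M1).
Proof.
move=> H1 H2 H3 H4; rewrite /T; expand.
rewrite ?H1 ?H2 ?H3 ?H4 -(mulmxA M1 M2 M2) H2 mulmx0 ?mul0mx. lin.
Qed.

Lemma EmEm' i j k l : Em i j *m Em k l = ((j == k) && (j < N)%N)%:R *: Em i l.
Proof.
case: (ltnP j N) => Hj; first by rewrite andbT EmEm.
rewrite andbF scale0r; apply/matrixP => a b; rewrite !mxE big1 // => c _.
rewrite !mxE (_ : (c == j :> nat) = false) ?andbF ?mul0r //.
by apply/negbTE; rewrite neq_ltn (leq_trans (ltn_ord c) Hj).
Qed.

End Mx.

Lemma sigK k : sig (sig k) = k.
Proof. by rewrite /sig; case: k => [|k] //=; case O: (odd k) => /=; rewrite ?O //= negbK O. Qed.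

Lemma sig_cases q : exists k, (q = 2 * k /\ sig q = 2 * k + 1)%N \/ (q = 2 * k + 1 /\ sig q = 2 * k)%N.
Proof.
exists q./2; rewrite /sig; have E := odd_double_half q; rewrite -mul2n in E.
by case: (odd q) E => /= E; [right|left]; split; lia.
Qed.

Lemma sig0 : sig 0 = 1%N. Proof. by []. Qed.
Lemma sig1 : sig 1 = 0%N. Proof. by []. Qed.

Ltac pd q := let k := fresh "k" in let Hq := fresh "Hq" in let Hs := fresh "Hs" in
  move: (sig_cases q) => [k [[Hq Hs]|[Hq Hs]]]; rewrite ?Hs; subst q.

Ltac dec := repeat match goal with
  | |- context [(?x == ?y :> nat)] =>
      (rewrite (_ : (x == y) = true); [|by apply/eqP; lia])
   || (rewrite (_ : (x == y) = false); [|by apply/negbTE/eqP; lia])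
  | |- context [(?x <= ?y)%N] =>
      (rewrite (_ : (x <= y)%N = true); [|by lia])
   || (rewrite (_ : (x <= y)%N = false); [|by apply/negbTE; lia])
  end.
Ltac dec2 := dec; repeat (match goal with
  | |- context [(?x == ?y :> nat)] => case: (x =P y) => ?; dec end).

Ltac mxexp := repeat progress (rewrite ?mulmxDl ?mulmxDr ?mulmxBl ?mulmxBr
  ?mulNmx ?mulmxN ?mul0mx ?mulmx0 ?scaler0 ?scale0r -?scalemxAl -?scalemxAr ?EmEm').

Section Idx.
Variables (A : comNzRingType) (n : nat).
Local Notation N := n.*2.
Local Notation Em := (@Em A n).
Local Notation Dm := (@Dm A n).

Ltac fin := mxexp; dec2; rewrite /= ?mulr1n ?mulr0n ?scale1r ?scale0r; lin.

Lemma DmDm0 i j : i != j -> Dm i j *m Dm i j = 0.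
Proof. rewrite /Dm; pd i; pd j; move=> H; fin. Qed.

Section C.
Variables q p : nat.
Hypotheses (Hq : (2 <= q < N)%N) (Hp : (2 <= p < N)%N) (Hpq : p != q) (Hpsq : p != sig q).
Ltac go := move: Hq Hp Hpq Hpsq; rewrite /Dm; pd q; pd p; rewrite ?sig0 ?sig1 => H1 H2 H3 H4; fin.

Lemma C1a : Dm q p *m Dm p 0 *m Dm q p = 0. Proof. go. Qed.
Lemma C1b : Dm p 0 *m Dm q p *m Dm p 0 = 0. Proof. go. Qed.
Lemma C1c : Dm q p *m Dm p 0 - Dm p 0 *m Dm q p = Dm q 0. Proof. go. Qed.
Lemma C2a : Dm 0 q *m Dm q p *m Dm 0 q = 0. Proof. go. Qed.
Lemma C2b : Dm q p *m Dm 0 q *m Dm q p = 0. Proof. go. Qed.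
Lemma C2c : Dm 0 q *m Dm q p - Dm q p *m Dm 0 q = Dm 0 p. Proof. go. Qed.
Lemma C3a : Dm p 0 *m Dm 0 q *m Dm p 0 = 0. Proof. go. Qed.
Lemma C3b : Dm 0 q *m Dm p 0 *m Dm 0 q = 0. Proof. go. Qed.
Lemma C3c : Dm p 0 *m Dm 0 q - Dm 0 q *m Dm p 0 = Dm p q. Proof. go. Qed.
Lemma M5 : Dm q p *m Dm 0 p = Dm 0 p *m Dm q p. Proof. go. Qed.
Lemma M6 : Dm q p *m Dm q 0 = Dm q 0 *m Dm q p. Proof. go. Qed.
End C.

Section M.
Variables k l : nat.
Hypotheses (Hk : (2 <= k < N)%N) (Hl : (2 <= l < N)%N).
Ltac go := move: Hk Hl; rewrite /Dm; pd k; pd l; rewrite ?sig0 ?sig1 => H1 H2; fin.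
Lemma M1 : Dm 0 k *m Dm 0 l = Dm 0 l *m Dm 0 k. Proof. go. Qed.
Lemma M2 : Dm k 0 *m Dm l 0 = Dm l 0 *m Dm k 0. Proof. go. Qed.
End M.
Lemma M3 k : (2 <= k < N)%N -> Dm 0 k *m Dm (sig k) 0 = Dm (sig k) 0 *m Dm 0 k.
Proof. rewrite /Dm ?sigK; pd k; rewrite ?sig0 ?sig1 => H1; fin. Qed.
Lemma M4 k : (2 <= k < N)%N -> Dm k 0 *m Dm 0 (sig k) = Dm 0 (sig k) *m Dm k 0.
Proof. rewrite /Dm ?sigK; pd k; rewrite ?sig0 ?sig1 => H1; fin. Qed.
End Idx.

Section Ideal.
Variables (R : comNzRingType) (I : {pred R}).
Hypothesis HI : is_ideal I.

Lemma I0 : 0 \in I. Proof. by case: HI. Qed.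
Lemma ID x y : x \in I -> y \in I -> x + y \in I. Proof. by case: HI => _ H _; apply: H. Qed.
Lemma IM a x : x \in I -> a * x \in I. Proof. by case: HI => _ _ H; apply: H. Qed.
Lemma IMr a x : x \in I -> x * a \in I. Proof. by rewrite mulrC; apply: IM. Qed.
Lemma IN x : x \in I -> - x \in I. Proof. by move=> H; rewrite -mulN1r; apply: IM. Qed.
Lemma Isum (J : Type) (s : seq J) (P : pred J) (F : J -> R) :
  (forall j, P j -> F j \in I) -> \sum_(j <- s | P j) F j \in I.
Proof. move=> H; apply: (big_ind (fun x => x \in I)) => //; [exact: I0 | exact: ID]. Qed.

Lemma I2D h1 h2 : polyI2 I h1 -> polyI2 I h2 -> polyI2 I (h1 + h2).
Proof. by move=> H1 H2 k l; rewrite !coefD; apply: ID. Qed.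
Lemma I2N h : polyI2 I h -> polyI2 I (- h).
Proof. by move=> H k l; rewrite !coefN; apply: IN. Qed.
Lemma I2Ml r h : polyI2 I h -> polyI2 I (r * h).
Proof.
move=> H k l; rewrite coefM coef_sum; apply: Isum => j _.
rewrite coefM; apply: Isum => i _; exact: IM.
Qed.
Lemma I2Mr r h : polyI2 I h -> polyI2 I (h * r).
Proof. by rewrite mulrC; apply: I2Ml. Qed.
Lemma I2cst c : c \in I -> polyI2 I (cst2 c).
Proof.
move=> H k l; rewrite /cst2 coefC; case: (k == 0%N) => /=; last by rewrite coef0 I0.
by rewrite coefC; case: (l == 0%N) => //; exact: I0.
Qed.
Lemma I2sum (J : Type) (s : seq J) (P : pred J) (F : J -> {poly {poly R}}) :
  (forall j, P j -> polyI2 I (F j)) -> polyI2 I (\sum_(j <- s | P j) F j).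
Proof.
move=> H k l; rewrite !coef_sum; apply: Isum => j Pj; exact: H.
Qed.
End Ideal.

Section OE.
Variables (A : comNzRingType) (n : nat).
Local Notation oe := (@oe A n).
Local Notation Dm := (@Dm A n).
Local Notation "''M'" := ('M[A]_(n.*2)).

Lemma oe_inv i j z : i != j -> oe i j z *m oe i j (- z) = 1%:M.
Proof. move=> H; rewrite !oeE; exact: T_inv (DmDm0 _ _ H). Qed.
Lemma oe_inv' i j z : i != j -> oe i j (- z) *m oe i j z = 1%:M.
Proof. by move=> H; rewrite -{2}(opprK z) oe_inv. Qed.

Lemma oe_comm i j k l x y : Dm i j *m Dm k l = Dm k l *m Dm i j ->
  oe i j x *m oe k l y = oe k l y *m oe i j x.
Proof. by move=> H; rewrite !oeE; apply: T_comm. Qed.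

Lemma oe_commut i j k l i' j' x y : i != j -> k != l ->
  Dm i j *m Dm k l *m Dm i j = 0 -> Dm k l *m Dm i j *m Dm k l = 0 ->
  Dm i j *m Dm k l - Dm k l *m Dm i j = Dm i' j' ->
  oe i j x *m oe k l y *m oe i j (- x) *m oe k l (- y) = oe i' j' (x * y).
Proof.
move=> H1 H2 H3 H4 H5; rewrite !oeE -H5.
by apply: T_commutator => //; apply: DmDm0.
Qed.

Lemma oe_commut_rev i j k l i' j' x y : i != j -> k != l ->
  Dm i j *m Dm k l *m Dm i j = 0 -> Dm k l *m Dm i j *m Dm k l = 0 ->
  Dm k l *m Dm i j - Dm i j *m Dm k l = Dm i' j' ->
  oe i j x *m oe k l y *m oe i j (- x) *m oe k l (- y) = oe i' j' (- (x * y)).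
Proof.
move=> H1 H2 H3 H4 H5; rewrite !oeE -H5.
rewrite (T_commutator _ _ (DmDm0 _ _ H1) (DmDm0 _ _ H2) H3 H4) /T.
by rewrite -opprB scalerN scaleNr.
Qed.

Lemma conj_rule (U V U' V' Z : 'M) :
  U *m V *m U' *m V' = Z -> V' *m V = 1%:M -> U *m V *m U' = Z *m V.
Proof. by move=> <- H; rewrite -(mulmxA _ V') H mulmx1. Qed.

Lemma conj_commute (U V U' : 'M) : U *m V = V *m U -> U *m U' = 1%:M -> U *m V *m U' = V.
Proof. by move=> H1 H2; rewrite H1 -mulmxA H2 mulmx1. Qed.

Lemma conjM (U U' M1 M2 : 'M) : U' *m U = 1%:M ->
  U *m (M1 *m M2) *m U' = (U *m M1 *m U') *m (U *m M2 *m U').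
Proof. by move=> H; rewrite !mulmxA -(mulmxA _ U') H mulmx1. Qed.

Lemma oe_prod_cat (s1 s2 : seq (nat * nat * A)) :
  oe_prod n (s1 ++ s2) = oe_prod n s1 *m oe_prod n s2.
Proof. by elim: s1 => [|g s IH] /=; rewrite ?mul1mx // IH mulmxA. Qed.
End OE.

Lemma sig_facts n k : (2 <= k < n.*2)%N -> [&& (2 <= sig k)%N, (sig k < n.*2)%N & sig k != k].
Proof. pd k; move=> *; lia. Qed.

Definition pick_p (q : nat) : nat := if (q < 4)%N then 4%N else 2%N.
Lemma pick_p_facts n q : (3 <= n)%N -> (2 <= q < n.*2)%N ->
  [&& (2 <= pick_p q < n.*2)%N, pick_p q != q, pick_p q != sig q,
      q != pick_p q & q != sig (pick_p q)].
Proof. rewrite /pick_p; case: (ltnP q 4) => H; pd q; rewrite /sig /=; move=> *; lia. Qed.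

Section G.
Variables (R : comNzRingType) (I : {pred R}) (n : nat).
Hypothesis HI : is_ideal I.
Local Notation A := {poly {poly R}}.
Local Notation Y := (varY R).
Local Notation oe := (@oe A n).
Local Notation "''M'" := ('M[A]_(n.*2)).
Local Notation N := n.*2.

Definition goodt (t : nat * nat * A) :=
  oe_idx n t.1.1 t.1.2 /\ (t.1.1 = 0%N \/ (t.1.2 = 0%N /\ polyI2 I t.2)).
Definition Gm m (M : 'M) := exists s : seq (nat * nat * A),
  (forall t, t \in s -> goodt t) /\
  M = oe_prod n [seq (t.1.1, t.1.2, Y ^+ m * t.2) | t <- s].

Lemma Gm1 m : Gm m 1%:M.
Proof. by exists [::]. Qed.
Lemma GmM m M1 M2 : Gm m M1 -> Gm m M2 -> Gm m (M1 *m M2).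
Proof.
move=> [s1 [H1 ->]] [s2 [H2 ->]]; exists (s1 ++ s2); split.
  by move=> t; rewrite mem_cat => /orP [] ?; [apply: H1 | apply: H2].
by rewrite map_cat oe_prod_cat.
Qed.

Definition PR m (z : A) := exists h, z = Y ^+ m * h.
Definition PI m (z : A) := exists h, polyI2 I h /\ z = Y ^+ m * h.

Lemma PRw a b z : (b <= a)%N -> PR a z -> PR b z.
Proof. move=> H [h ->]; exists (Y ^+ (a - b) * h); by rewrite mulrA -exprD subnKC. Qed.
Lemma PIw a b z : (b <= a)%N -> PI a z -> PI b z.
Proof.
move=> H [h [Hh ->]]; exists (Y ^+ (a - b) * h); split; first exact: I2Ml.
by rewrite mulrA -exprD subnKC.
Qed.
Lemma PRMl a z r : PR a z -> PR a (r * z).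
Proof. by move=> [h ->]; exists (r * h); ring. Qed.
Lemma PRMr a z r : PR a z -> PR a (z * r).
Proof. by move=> [h ->]; exists (h * r); ring. Qed.
Lemma PIMl a z r : PI a z -> PI a (r * z).
Proof. by move=> [h [Hh ->]]; exists (r * h); split; [exact: I2Ml | ring]. Qed.
Lemma PIMr a z r : PI a z -> PI a (z * r).
Proof. by move=> [h [Hh ->]]; exists (h * r); split; [exact: I2Mr | ring]. Qed.
Lemma PRN a z : PR a z -> PR a (- z).
Proof. by move=> [h ->]; exists (- h); ring. Qed.
Lemma PIN a z : PI a z -> PI a (- z).
Proof. by move=> [h [Hh ->]]; exists (- h); split; [exact: I2N | ring]. Qed.
Lemma PIR a z u : polyI2 I u -> PR a z -> PI a (u * z).
Proof. by move=> Hu [h ->]; exists (u * h); split; [exact: I2Mr | ring]. Qed.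
Lemma PIPR a z : PI a z -> PR a z.
Proof. by move=> [h [_ ->]]; exists h. Qed.
Lemma PRY a : PR a (Y ^+ a).
Proof. by exists 1; rewrite mulr1. Qed.

Lemma GR l m z : (2 <= l < N)%N -> PR m z -> Gm m (oe 0 l z).
Proof.
move=> Hl [h ->]; exists [:: (0%N, l, h)]; split; last by rewrite /= mulmx1.
move=> t; rewrite inE => /eqP -> /=; split; last by left.
by move: Hl; rewrite /oe_idx; pd l => /= *; lia.
Qed.
Lemma GI l m z : (2 <= l < N)%N -> PI m z -> Gm m (oe l 0 z).
Proof.
move=> Hl [h [Hh ->]]; exists [:: (l, 0%N, h)]; split; last by rewrite /= mulmx1.
move=> t; rewrite inE => /eqP -> /=; split; last by right.
by move: Hl; rewrite /oe_idx sig0; pd l => /= *; lia.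
Qed.

Lemma GO l k m z : (2 <= l < N)%N -> (2 <= k < N)%N -> l != k -> l != sig k ->
  PI (m + m) z -> exists x y, PI m x /\ PR m y /\
  oe l k z = oe l 0 x *m oe 0 k y *m oe l 0 (- x) *m oe 0 k (- y).
Proof.
move=> Hl Hk H1 H2 [h [Hh ->]]; exists (Y ^+ m * h), (Y ^+ m); split.
  by exists h.
split; first exact: PRY.
rewrite (@oe_commut _ _ l 0 0 k l k); first by rewrite exprD; congr oe; ring.
- by move: Hl; case: l {H1 H2}.
- by move: Hk; case: k {H1 H2}.
- exact: C3a.
- exact: C3b.
- exact: C3c.
Qed.

Lemma GmO l k m z : (2 <= l < N)%N -> (2 <= k < N)%N -> l != k -> l != sig k ->
  PI (m + m) z -> Gm m (oe l k z).
Proof.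
move=> Hl Hk H1 H2 Hz; have [x [y [Hx [Hy ->]]]] := GO Hl Hk H1 H2 Hz.
by repeat apply: GmM; (apply: GI || apply: GR) => //; (apply: PIN || apply: PRN).
Qed.
End G.

Section S.
Variables (R : comNzRingType) (I : {pred R}) (n : nat).
Hypothesis HI : is_ideal I.
Hypothesis Hn : (3 <= n)%N.
Local Notation A := {poly {poly R}}.
Local Notation Y := (varY R).
Local Notation oe := (@oe A n).
Local Notation N := n.*2.
Local Notation Gm := (@Gm R I n).
Local Notation PR := (@PR R).
Local Notation PI := (@PI R I).

Lemma stepH1 q m (c w : A) : (2 <= q < N)%N -> PI (4 * m) w ->
  Gm m (oe 0 q c *m oe q 0 w *m oe 0 q (- c)).
Proof.
move=> Hq [h [Hh ->]].
move: (pick_p q) (pick_p_facts Hn Hq) => p /and5P [Hp Hpq Hpsq Hqp Hqsp].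
have q0 : q != 0%N by apply/eqP => E; move: Hq; rewrite E.
have p0 : p != 0%N by apply/eqP => E; move: Hp; rewrite E.
have q0' : 0%N != q by rewrite eq_sym.
have p0' : 0%N != p by rewrite eq_sym.
have Ew : Y ^+ (4 * m) * h = Y ^+ (2 * m) * (Y ^+ (2 * m) * h).
  by rewrite mulrA -exprD; congr (_ ^+ _ * _); lia.
set al := Y ^+ (2 * m); set be := Y ^+ (2 * m) * h.
have Hbe : PI (m + m) be by exists h; split => //; congr (_ ^+ _ * _); lia.
have Hal : PR (m + m) al by exists 1; rewrite mulr1; congr (_ ^+ _); lia.
have HT : oe q 0 (al * be) = oe q p al *m oe p 0 be *m oe q p (- al) *m oe p 0 (- be).
  by rewrite (@oe_commut _ _ q p p 0 q 0) //; [exact: C1a | exact: C1b | exact: C1c].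
rewrite Ew HT !(@conjM _ _ (oe 0 q c) (oe 0 q (- c))) ?oe_inv' //.
have cU : forall a, oe 0 q c *m oe q p a *m oe 0 q (- c) = oe 0 p (c * a) *m oe q p a.
  move=> a; apply: conj_rule; last exact: oe_inv'.
  by rewrite (@oe_commut _ _ 0 q q p 0 p) //; [exact: C2a | exact: C2b | exact: C2c].
have cV : forall b, oe 0 q c *m oe p 0 b *m oe 0 q (- c) = oe p q (- (c * b)) *m oe p 0 b.
  move=> b; apply: conj_rule; last exact: oe_inv'.
  by rewrite (@oe_commut_rev _ _ 0 q p 0 p q) //; [exact: C3b | exact: C3a | exact: C3c].
rewrite !cU !cV.
set U := oe q p al; set U' := oe q p (- al).
have UU : U' *m U = 1%:M by exact: oe_inv'.
have UU' : U *m U' = 1%:M by exact: oe_inv.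
have cU1 : forall x, PI m x -> Gm m (U *m oe p 0 x *m U').
  move=> x Hx; rewrite (@conj_rule _ _ _ _ _ (oe p 0 (- x)) (oe q 0 (al * x))).
  - apply: GmM; apply: GI => //; exact: PIMl.
  - by rewrite (@oe_commut _ _ q p p 0 q 0) //; [exact: C1a | exact: C1b | exact: C1c].
  - exact: oe_inv'.
have cU2 : forall y, PR m y -> Gm m (U *m oe 0 q y *m U').
  move=> y Hy; rewrite (@conj_rule _ _ _ _ _ (oe 0 q (- y)) (oe 0 p (- (al * y)))).
  - apply: GmM; apply: GR => //; apply: PRN; exact: PRMl.
  - by rewrite (@oe_commut_rev _ _ q p 0 q 0 p) //; [exact: C2b | exact: C2a | exact: C2c].
  - exact: oe_inv'.
have cU3 : forall y, PR m y -> Gm m (U *m oe 0 p y *m U').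
  move=> y Hy; rewrite conj_commute //; first by apply: GR.
  by apply: oe_comm; exact: M5.
have [x [y [Hx [Hy ->]]]] := GO Hp Hq Hpq Hpsq (PIN HI (@PIMl _ _ HI _ _ c Hbe)).
have -> : forall M1 M2 M3 M4 M5 M6 M7 M8 : 'M[A]_N,
  M1 *m M2 *m (M3 *m M4) *m (M5 *m M6) *m (M7 *m M8) =
  M1 *m (M2 *m (M3 *m M4 *m M5) *m M6) *m (M7 *m M8).
  by move=> *; rewrite !mulmxA.
rewrite !(@conjM _ _ U U') //.
have Hal' : PR m al by apply: PRw Hal; lia.
have Hbe' : PI m be by apply: (PIw HI _ Hbe); lia.
repeat (first [apply: cU1 | apply: cU2 | apply: cU3 | apply: GmM]).
- by apply: GR => //; apply: PRMl.
- done.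
- done.
- exact: PIN.
- exact: PRN.
- done.
- by apply: PRMl; apply: PRN.
- apply: GmO => //; apply: PIN => //; apply: PIMl => //; exact: PIN.
- by apply: GI => //; apply: PIN.
Qed.

Lemma stepH2 q m (c w : A) : (2 <= q < N)%N -> polyI2 I c -> PR (4 * m) w ->
  Gm m (oe q 0 c *m oe 0 q w *m oe q 0 (- c)).
Proof.
move=> Hq Hc [h ->].
move: (pick_p q) (pick_p_facts Hn Hq) => p /and5P [Hp Hpq Hpsq Hqp Hqsp].
have q0 : q != 0%N by apply/eqP => E; move: Hq; rewrite E.
have p0 : p != 0%N by apply/eqP => E; move: Hp; rewrite E.
have q0' : 0%N != q by rewrite eq_sym.
have p0' : 0%N != p by rewrite eq_sym.
have Ew : Y ^+ (4 * m) * h = Y ^+ (2 * m) * (Y ^+ (2 * m) * h).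
  by rewrite mulrA -exprD; congr (_ ^+ _ * _); lia.
set al := Y ^+ (2 * m); set be := Y ^+ (2 * m) * h.
have Hbe : PR (m + m) be by exists h; congr (_ ^+ _ * _); lia.
have Hal : PR (m + m) al by exists 1; rewrite mulr1; congr (_ ^+ _); lia.
have Hal' : PR m al by apply: PRw Hal; lia.
have Hbe' : PR m be by apply: PRw Hbe; lia.
have HT : oe 0 q (al * be) = oe 0 p al *m oe p q be *m oe 0 p (- al) *m oe p q (- be).
  by rewrite (@oe_commut _ _ 0 p p q 0 q) //; [exact: C2a | exact: C2b | exact: C2c].
rewrite Ew HT !(@conjM _ _ (oe q 0 c) (oe q 0 (- c))) ?oe_inv' //.
have cU : forall a, oe q 0 c *m oe 0 p a *m oe q 0 (- c) = oe q p (c * a) *m oe 0 p a.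
  move=> a; apply: conj_rule; last exact: oe_inv'.
  by rewrite (@oe_commut _ _ q 0 0 p q p) //; [exact: C3a | exact: C3b | exact: C3c].
have cV : forall b, oe q 0 c *m oe p q b *m oe q 0 (- c) = oe p 0 (- (c * b)) *m oe p q b.
  move=> b; apply: conj_rule; last exact: oe_inv'.
  by rewrite (@oe_commut_rev _ _ q 0 p q p 0) //; [exact: C1b | exact: C1a | exact: C1c].
rewrite !cU !cV.
set V := oe p q be; set V' := oe p q (- be).
have VV : V' *m V = 1%:M by exact: oe_inv'.
have VV' : V *m V' = 1%:M by exact: oe_inv.
have cV1 : forall x, PI m x -> Gm m (V *m oe q 0 x *m V').
  move=> x Hx; rewrite (@conj_rule _ _ _ _ _ (oe q 0 (- x)) (oe p 0 (be * x))).
  - apply: GmM; apply: GI => //; exact: PIMl.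
  - by rewrite (@oe_commut _ _ p q q 0 p 0) //; [exact: C1a | exact: C1b | exact: C1c].
  - exact: oe_inv'.
have cV2 : forall y, PR m y -> Gm m (V *m oe 0 p y *m V').
  move=> y Hy; rewrite (@conj_rule _ _ _ _ _ (oe 0 p (- y)) (oe 0 q (- (be * y)))).
  - apply: GmM; apply: GR => //; apply: PRN; exact: PRMl.
  - by rewrite (@oe_commut_rev _ _ p q 0 p 0 q) //; [exact: C2b | exact: C2a | exact: C2c].
  - exact: oe_inv'.
have cV3 : forall z, PI m z -> Gm m (V *m oe p 0 z *m V').
  move=> z Hz; rewrite conj_commute //; first by apply: GI.
  by apply: oe_comm; exact: M6.
have Hca : PI (m + m) (c * - al) by apply: PIR => //; apply: PRN.
have [x [y [Hx [Hy ->]]]] := GO Hq Hp Hqp Hqsp Hca.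
have -> : forall M1 M2 M3 M4 M5 M6 M7 M8 : 'M[A]_N,
  M1 *m M2 *m (M3 *m M4) *m (M5 *m M6) *m (M7 *m M8) =
  M1 *m M2 *m M3 *m (M4 *m (M5 *m M6 *m M7) *m M8).
  by move=> *; rewrite !mulmxA.
rewrite !(@conjM _ _ V V') //.
repeat (first [apply: cV1 | apply: cV2 | apply: cV3 | apply: GmM]).
- by apply: GmO => //; apply: PIR => //.
- by apply: GR.
- by apply: GI => //; apply: PIN => //; apply: PIR.
- done.
- done.
- exact: PIN.
- exact: PRN.
- exact: PRN.
- by apply: PIN => //; apply: PIR => //; apply: PRN.
Qed.
End S.

Lemma sig_swap a b : (a != sig b) = (b != sig a).
Proof. by congr negb; apply/eqP/eqP => ->; rewrite sigK. Qed.

Lemma oe_idx_0l n j : oe_idx n 0 j -> (2 <= j < n.*2)%N.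
Proof. rewrite /oe_idx; pd j => *; lia. Qed.
Lemma oe_idx_l0 n i : oe_idx n i 0 -> (2 <= i < n.*2)%N.
Proof. rewrite /oe_idx sig0; pd i => *; lia. Qed.

Section S2.
Variables (R : comNzRingType) (I : {pred R}) (n : nat).
Hypothesis HI : is_ideal I.
Hypothesis Hn : (3 <= n)%N.
Local Notation A := {poly {poly R}}.
Local Notation Y := (varY R).
Local Notation oe := (@oe A n).
Local Notation N := n.*2.
Local Notation Gm := (@Gm R I n).
Local Notation PR := (@PR R).
Local Notation PI := (@PI R I).

Lemma stepRI k l m (c w : A) : (2 <= k < N)%N -> (2 <= l < N)%N -> l != k -> l != sig k ->
  PI (4 * m) w -> Gm m (oe 0 k c *m oe l 0 w *m oe 0 k (- c)).
Proof.
move=> Hk Hl H1 H2 Hw.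
have k0 : (0 != k)%N by apply/eqP => E; move: Hk; rewrite -E.
have l0 : (l != 0)%N by apply/eqP => E; move: Hl; rewrite E.
have Hw' : PI m w by apply: (PIw HI _ Hw); lia.
have Hw2 : PI (m + m) w by apply: (PIw HI _ Hw); lia.
rewrite (@conj_rule _ _ _ _ _ (oe l 0 (- w)) (oe l k (- (c * w)))).
- apply: GmM; last by apply: GI.
  by apply: GmO => //; apply: PIN => //; apply: PIMl.
- by rewrite (@oe_commut_rev _ _ 0 k l 0 l k) //; [exact: C3b | exact: C3a | exact: C3c].
- exact: oe_inv'.
Qed.

Lemma stepIR k l m (c w : A) : (2 <= k < N)%N -> (2 <= l < N)%N -> l != k -> l != sig k ->
  polyI2 I c -> PR (4 * m) w -> Gm m (oe k 0 c *m oe 0 l w *m oe k 0 (- c)).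
Proof.
move=> Hk Hl H1 H2 Hc Hw.
have H1' : k != l by rewrite eq_sym.
have H2' : k != sig l by rewrite sig_swap.
have k0 : (k != 0)%N by apply/eqP => E; move: Hk; rewrite E.
have l0 : (0 != l)%N by apply/eqP => E; move: Hl; rewrite -E.
have Hw' : PR m w by apply: (PRw _ Hw); lia.
have Hw2 : PR (m + m) w by apply: (PRw _ Hw); lia.
rewrite (@conj_rule _ _ _ _ _ (oe 0 l (- w)) (oe k l (c * w))).
- apply: GmM; last by apply: GR.
  by apply: GmO => //; apply: PIR.
- by rewrite (@oe_commut _ _ k 0 0 l k l) //; [exact: C3a | exact: C3b | exact: C3c].
- exact: oe_inv'.
Qed.

Lemma step m (g : nat * nat * R) (t : nat * nat * A) : EO1_gen n I g -> goodt I n t ->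
  Gm m (oe g.1.1 g.1.2 (cst2 g.2) *m oe t.1.1 t.1.2 (Y ^+ (4 * m) * t.2)
        *m oe g.1.1 g.1.2 (- cst2 g.2)).
Proof.
case: g => [[i0 j0] c]; case: t => [[i j] h] /= Hg [Hidx Ht].
have Hw4 : PR (4 * m) (Y ^+ (4 * m) * h) by exists h.
have Hw : PR m (Y ^+ (4 * m) * h) by apply: (PRw _ Hw4); lia.
move: Hg Hidx Ht; rewrite /EO1_gen /= => Hg Hidx Ht.
case/orP: Hg => [/andP [/eqP -> Hk] | /and3P [/eqP -> Hk Hc]].
-
  case: Ht => [Ei | [Ej Hh]].
  + subst i; have Hl : (2 <= j < N)%N by exact: oe_idx_0l.
    rewrite conj_commute; first exact: GR.
    - by apply: oe_comm; apply: M1.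
    - by apply: oe_inv; apply/eqP => E; move: Hk; rewrite -E.
  + subst j; have Hl : (2 <= i < N)%N by exact: oe_idx_l0.
    have Hw4I : PI (4 * m) (Y ^+ (4 * m) * h) by exists h.
    have HwI : PI m (Y ^+ (4 * m) * h) by apply: (PIw HI _ Hw4I); lia.
    case: (eqVneq i j0) => [E | E1].
      by subst i; apply: stepH1.
    case: (eqVneq i (sig j0)) => [E | E2].
      subst i; rewrite conj_commute; first exact: GI.
      - by apply: oe_comm; apply: M3.
      - by apply: oe_inv; apply/eqP => E; move: Hk; rewrite -E.
    exact: stepRI.
-
  have Hc2 : polyI2 I (cst2 c) by apply: I2cst.
  case: Ht => [Ei | [Ej Hh]].
  + subst i; have Hl : (2 <= j < N)%N by exact: oe_idx_0l.
    case: (eqVneq j i0) => [E | E1].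
      by subst j; apply: stepH2.
    case: (eqVneq j (sig i0)) => [E | E2].
      subst j; rewrite conj_commute; first exact: GR.
      - by apply: oe_comm; apply: M4.
      - by apply: oe_inv; apply/eqP => E; move: Hk; rewrite E.
    exact: stepIR.
  + subst j; have Hl : (2 <= i < N)%N by exact: oe_idx_l0.
    have Hw4I : PI (4 * m) (Y ^+ (4 * m) * h) by exists h.
    have HwI : PI m (Y ^+ (4 * m) * h) by apply: (PIw HI _ Hw4I); lia.
    rewrite conj_commute; first exact: GI.
    - by apply: oe_comm; apply: M2.
    - by apply: oe_inv; apply/eqP => E; move: Hk; rewrite E.
Qed.
End S2.

Section S3.
Variables (R : comNzRingType) (I : {pred R}) (n : nat).
Hypothesis HI : is_ideal I.
Hypothesis Hn : (3 <= n)%N.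
Local Notation A := {poly {poly R}}.
Local Notation Y := (varY R).
Local Notation oe := (@oe A n).
Local Notation N := n.*2.
Local Notation Gm := (@Gm R I n).

Lemma gen_neq (g : nat * nat * R) : EO1_gen n I g -> g.1.1 != g.1.2.
Proof.
case: g => [[i j] c]; rewrite /EO1_gen /= => /orP [/andP [/eqP -> H] | /and3P [/eqP -> H _]]; lia.
Qed.

Lemma conjG m (g : nat * nat * R) M : EO1_gen n I g -> Gm (4 * m) M ->
  Gm m (oe g.1.1 g.1.2 (cst2 g.2) *m M *m oe g.1.1 g.1.2 (- cst2 g.2)).
Proof.
move=> Hg [s [Hs ->]]; elim: s Hs => [|t s IH] Hs /=.
  by rewrite mulmx1 oe_inv ?gen_neq //; apply: Gm1.
rewrite (@conjM _ _ _ _ _ _ (oe_inv' _ _ (gen_neq Hg))).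
apply: GmM; first by apply: step => //; apply: Hs; rewrite mem_head.
by apply: IH => u Hu; apply: Hs; rewrite in_cons Hu orbT.
Qed.

Lemma mainG (eps : seq (nat * nat * R)) : all (EO1_gen n I) eps ->
  let E := oe_prod n [seq (g.1.1, g.1.2, cst2 g.2) | g <- eps] in
  exists Ei, E *m Ei = 1%:M /\
    forall m M, Gm (4 ^ size eps * m) M -> Gm m (E *m M *m Ei).
Proof.
elim: eps => [|g eps IH] /=.
  by move=> _; exists 1%:M; split; [rewrite mulmx1 | move=> m M; rewrite mulmx1 mul1mx mul1n].
move=> /andP [Hg Hall]; have [Ei [HE HG]] := IH Hall.
set E := oe_prod _ _ in HE HG *.
exists (Ei *m oe g.1.1 g.1.2 (- cst2 g.2)); split.
  by rewrite mulmxA -(mulmxA _ E) HE mulmx1 oe_inv // gen_neq.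
move=> m M HM.
have HM' : Gm (4 ^ size eps * (4 * m)) M by rewrite mulnA -expnSr.
have := conjG Hg (HG _ _ HM').
by rewrite !mulmxA.
Qed.
End S3.

Unset Implicit Arguments. Set Strict Implicit. Set Printing Implicit Defensive.

Lemma eval2_I (R : comNzRingType) (I : {pred R}) (f : {poly R}) u :
  is_ideal I -> polyI I f -> polyI2 I (eval2 f u).
Proof.
move=> HI Hf; rewrite /eval2 horner_coef; apply: I2sum => // k _.
apply: I2Mr => //; rewrite coef_map_id0; first exact: I2cst.
by rewrite /cst2 !polyC0.
Qed.

Theorem mainTheorem5 (R : comNzRingType) (I : {pred R}) (n : nat)
  (eps : seq (nat * nat * R)) (i j : nat) (f : {poly R}) :
  is_ideal I -> (3 <= n)%N ->
  all (EO1_gen n I) eps ->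
  ((i == 0%N) && (2 <= j < n.*2)%N \/
   [/\ j = 0%N, (2 <= i < n.*2)%N & polyI I f]) ->
  let E := oe_prod n [seq (g.1.1, g.1.2, cst2 g.2) | g <- eps] in
  let u := varY R ^+ (4 ^ size eps) * varX R in
  forall Einv : 'M[{poly {poly R}}]_(n.*2),
    E *m Einv = 1%:M -> Einv *m E = 1%:M ->
  exists s : seq (nat * nat * {poly {poly R}}),
    (forall t, t \in s -> oe_idx n t.1.1 t.1.2 /\
       ((t.1.1 = 0%N) \/ (t.1.2 = 0%N /\ polyI2 I t.2))) /\
    E *m oe n i j (u * eval2 f u) *m Einv
      = oe_prod n [seq (t.1.1, t.1.2, varY R * t.2) | t <- s].
Proof.
move=> HI Hn Hall Hij E u Einv H1 H2.
have [Ei [HE HG]] := mainG HI Hn Hall.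
have -> : Einv = Ei by rewrite -[Einv]mulmx1 -HE mulmxA H2 mul1mx.
have Hg : Gm I (n:=n) (4 ^ size eps * 1)%N (oe n i j (u * eval2 f u)).
  have -> : u * eval2 f u = varY R ^+ (4 ^ size eps * 1)%N * (varX R * eval2 f u).
    by rewrite muln1 /u; ring.
  exists [:: (i, j, varX R * eval2 f u)]; split; last by rewrite /= mulmx1.
  move=> t; rewrite inE => /eqP -> /=.
  case: Hij => [/andP [/eqP -> Hj] | [-> Hi Hf]].
    by split; [move: Hj; rewrite /oe_idx /=; pd j => *; lia | left].
  split; first by move: Hi; rewrite /oe_idx /= sig0; pd i => *; lia.
  by right; split => //; apply: I2Ml => //; apply: eval2_I.
have [s [Hs Heq]] := HG 1%N _ Hg.
exists s; split => //.
Qed.
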